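(* In the virtually-$\mathbb{Z}$ setting described in the context, for every $s\in G$ the quantity $\mathrm{imp}_k(s)=\max\{|p(gs)-p(g)| : g\in V_{\{k\}}\}$ does not depend on $k\in\mathbb{Z}$.
   Context: $G$ is a finitely generated group, $H\leq G$ a subgroup of finite index and $\varphi:H\to\mathbb{Z}$ a group isomorphism. $F\subseteq G$ is a finite set with $1_G\in F$ containing exactly one element of each right coset $Hg$, so every $g\in G$ decomposes uniquely as $g=zf$ with $z\in H$, $f\in F$. Define $p:G\to\mathbb{Z}$ by $p(zf)=\varphi(z)$. For $k\in\mathbb{Z}$, the $k$-th vertebra is $V_{\{k\}}=p^{-1}(\{k\})$ (a finite set). *)

(* Defs.v *)
From Stdlib Require Import ZArith List.
Open Scope Z_scope.

Definition is_group {G : Type} (mul : G -> G -> G) (one : G) (inv : G -> G)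
  : Prop :=
  (forall x y z, mul x (mul y z) = mul (mul x y) z) /\
  (forall x, mul one x = x) /\ (forall x, mul x one = x) /\
  (forall x, mul (inv x) x = one) /\ (forall x, mul x (inv x) = one).

Definition is_subgroup {G : Type} (mul : G -> G -> G) (one : G)
  (inv : G -> G) (H : G -> Prop) : Prop :=
  H one /\ (forall x y, H x -> H y -> H (mul x y)) /\
  (forall x, H x -> H (inv x)).

Inductive generated {G : Type} (mul : G -> G -> G) (one : G) (inv : G -> G)
  (S : list G) : G -> Prop :=
| gen_base : forall s, In s S -> generated mul one inv S s
| gen_one : generated mul one inv S one
| gen_mul : forall x y, generated mul one inv S x ->
    generated mul one inv S y -> generated mul one inv S (mul x y)
| gen_inv : forall x, generated mul one inv S x ->
    generated mul one inv S (inv x).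

Definition finitely_generated {G : Type} (mul : G -> G -> G) (one : G)
  (inv : G -> G) : Prop :=
  exists S : list G, forall g, generated mul one inv S g.

(* phi restricted to H is a group isomorphism H -> Z (values of phi
   outside H are irrelevant). *)
Definition is_iso_to_Z {G : Type} (mul : G -> G -> G) (H : G -> Prop)
  (phi : G -> Z) : Prop :=
  (forall x y, H x -> H y -> phi (mul x y) = phi x + phi y) /\
  (forall x y, H x -> H y -> phi x = phi y -> x = y) /\
  (forall n : Z, exists z, H z /\ phi z = n).

Definition finite_index {G : Type} (mul : G -> G -> G) (inv : G -> G)
  (H : G -> Prop) : Prop :=
  exists L : list G, forall g, exists c, In c L /\ H (mul g (inv c)).

Definition right_transversal {G : Type} (mul : G -> G -> G) (H : G -> Prop)
  (F : list G) : Prop :=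
  forall g, exists z f, H z /\ In f F /\ g = mul z f /\
    forall z' f', H z' -> In f' F -> g = mul z' f' -> z' = z /\ f' = f.

Definition is_max_on {G : Type} (P : G -> Prop) (f : G -> Z) (m : Z) : Prop :=
  (exists g, P g /\ f g = m) /\ (forall g, P g -> f g <= m).

Definition vertebra {G : Type} (p : G -> Z) (k : Z) : G -> Prop :=
  fun g => p g = k.

(* Main.v *)
Require Import Defs.
From Stdlib Require Import ZArith List Lia.
Open Scope Z_scope.

Lemma list_argmax {A : Type} (f : A -> Z) (l : list A) (a : A) :
  In a l -> exists x, In x l /\ forall y, In y l -> f y <= f x.
Proof.
  revert a; induction l as [|b l IH]; intros a Ha; [destruct Ha|].
  destruct l as [|c l'].
  - exists b. split; [left; auto|]. intros y [->|[]]; lia.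
  - destruct (IH c (or_introl eq_refl)) as [x [Hx Hm]].
    destruct (Z_le_gt_dec (f b) (f x)).
    + exists x. split; [right; auto|]. intros y [<-|Hy]; [lia|auto].
    + exists b. split; [left; auto|]. intros y [<-|Hy]; [lia|].
      specialize (Hm y Hy); lia.
Qed.

Theorem proposition3
  (G : Type) (mul : G -> G -> G) (one : G) (inv : G -> G)
  (HG : is_group mul one inv)
  (Hfg : finitely_generated mul one inv)
  (H : G -> Prop) (HH : is_subgroup mul one inv H)
  (Hidx : finite_index mul inv H)
  (phi : G -> Z) (Hphi : is_iso_to_Z mul H phi)
  (F : list G) (HF1 : In one F) (HF : right_transversal mul H F)
  (p : G -> Z)
  (Hp : forall z f, H z -> In f F -> p (mul z f) = phi z) :
  forall s : G, exists m : Z, forall k : Z,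
    is_max_on (vertebra p k) (fun g => Z.abs (p (mul g s) - p g)) m.
Proof.
  destruct HG as [Hass [H1l [H1r [Hvl Hvr]]]].
  destruct HH as [Hone [Hmul Hinv]].
  destruct Hphi as [Phom [Pinj Psurj]].
  assert (Phi1 : phi one = 0).
  { pose proof (Phom one one Hone Hone) as E. rewrite H1l in E. lia. }
  assert (PA : forall z x, H z -> p (mul z x) = phi z + p x).
  { intros z x Hz. destruct (HF x) as [z' [f' [Hz' [Hf' [Ex _]]]]].
    subst x. rewrite Hass. rewrite !Hp; auto. }
  assert (PF : forall f, In f F -> p f = 0).
  { intros f Hf. rewrite <- (H1l f). rewrite Hp; auto. }
  intros s.
  destruct (list_argmax (fun f => Z.abs (p (mul f s) - p f)) F one HF1)
    as [f0 [Hf0 Hm]].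
  exists (Z.abs (p (mul f0 s) - p f0)). intros k. split.
  - destruct (Psurj k) as [z [Hz Ek]].
    exists (mul z f0). unfold vertebra. split.
    + rewrite PA; auto. rewrite PF; auto. lia.
    + rewrite <- Hass. rewrite (PA z (mul f0 s) Hz), (PA z f0 Hz). f_equal. lia.
  - intros g Hg. unfold vertebra in Hg.
    destruct (HF g) as [z [f [Hz [Hf [Eg _]]]]]. subst g.
    rewrite <- Hass. rewrite (PA z (mul f s) Hz), (PA z f Hz).
    specialize (Hm f Hf). simpl in Hm.
    replace (phi z + p (mul f s) - (phi z + p f)) with (p (mul f s) - p f) by lia.
    exact Hm.
Qed.
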